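(* Let $q$ be a prime power, let $p\ge2$ be an integer, and let $Z$ be a random vector in $\mathbb{F}_q^n$ with distribution $P_Z$. For $0\le d\le p$ define $$g(d)=\frac{1}{q^n}\sum_{x\in\mathbb{F}_q^n}\ \sum_{\substack{(v_1,\dots,v_p)\in(\mathbb{F}_q^n)^p\\ \mathrm{rank}[v_1,\dots,v_p]=d}}\ \prod_{l=1}^pP_Z(x-v_l).$$ Then for every $0\le d\le p$, $$g(d)\le\binom{p}{d}q^{(p-d)(d-H_p(Z))}.$$
   Context: The inner sum is over ordered $p$-tuples whose span has dimension exactly $d$ ($[v_1,\dots,v_p]$ is the $n\times p$ matrix with columns $v_i$). $H_p(Z)=\frac{1}{1-p}\log_q\sum_xP_Z(x)^p$. *)

(* Defs.v *)
From HB Require Import structures.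
From mathcomp Require Import all_boot all_order all_algebra all_field.
From mathcomp Require Import all_classical all_reals all_analysis.
Unset Printing Implicit Defensive.
Import Order.TTheory GRing.Theory Num.Theory.
Local Open Scope ring_scope.

Definition renyiH (R : realType) (F : finFieldType) (n p : nat)
  (P : {ffun 'cV[F]_n -> R}) : R :=
  (1 - p%:R)^-1 * (ln (\sum_x P x ^+ p) / ln (#|F|%:R)).

Definition gfun (R : realType) (F : finFieldType) (n p : nat)
  (P : {ffun 'cV[F]_n -> R}) (d : nat) : R :=
  (#|F|%:R ^+ n)^-1 *
  \sum_(x : 'cV[F]_n) \sum_(V : 'M[F]_(n, p) | \rank V == d)
     \prod_(l < p) P (x - col l V).

(* Main.v *)
Require Import Defs.
From HB Require Import structures.
From mathcomp Require Import all_boot all_order all_algebra all_field.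
From mathcomp Require Import all_classical all_reals all_analysis.
From mathcomp Require Import lra ring zify.
Import Order.TTheory GRing.Theory Num.Theory.
Local Open Scope ring_scope.

Section Arith.
Variable R : realFieldType.

Lemma root_le (x y : R) N : (0 < N)%N -> 0 <= x -> 0 <= y -> x ^+ N <= y ^+ N -> x <= y.
Proof. by move=> N0 x0 y0; rewrite (ler_pXn2r N0) // ?nnegrE. Qed.

Lemma agm_blocks (a b : R) (k l : nat) : 0 <= a -> 0 <= b -> (0 < k + l)%N ->
  a ^+ k * b ^+ l <= ((a *+ k + b *+ l) / (k + l)%:R) ^+ (k + l).
Proof.
move=> a0 b0 kl0.
pose E := fun i : 'I_(k + l) => if (i < k)%N then a else b.
have := leif_AGM (A := predT) (E := E).
have -> : #|(predT : {pred 'I_(k+l)})| = (k + l)%N by rewrite cardT size_enum_ord.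
move=> H; have {H} := leif_le (H _).
rewrite big_split_ord /= [X in X / _]big_split_ord /=.
rewrite /E.
under eq_bigr => i _ do rewrite /= ltn_ord.
under [X in _ * X]eq_bigr => i _ do rewrite /= ltnNge leq_addr /=.
under [X in (X + _) / _]eq_bigr => i _ do rewrite /= ltn_ord.
under [X in (_ + X) / _]eq_bigr => i _ do rewrite /= ltnNge leq_addr /=.
rewrite !prodr_const !sumr_const !card_ord; apply.
by move=> i _; rewrite /E; case: ifP.
Qed.

Lemma bernoulli (y : R) m : 0 <= y -> 1 + m%:R * (y - 1) <= y ^+ m.
Proof.
move=> y0; elim: m => [|m IH]; first by rewrite mul0r addr0 expr0.
rewrite exprS; apply: le_trans (ler_wpM2l y0 IH).
have h : 0 <= m%:R * (y - 1) ^+ 2 :> R by rewrite mulr_ge0 ?sqr_ge0.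
rewrite mulrS; nra.
Qed.

Lemma wmean (y : R) (k m : nat) : 0 <= y -> (k <= m)%N -> (0 < m)%N ->
  y ^+ k <= (y ^+ m *+ k + (m - k)%:R) / m%:R.
Proof.
move=> y0 km m0.
have := @agm_blocks (y ^+ m) 1 k (m - k) (exprn_ge0 m y0) ler01.
rewrite subnKC // expr1n mulr1 -exprM mulnC exprM.
move=> /(_ m0) H; apply: (@root_le _ _ m m0) => //.
  by rewrite exprn_ge0.
by rewrite divr_ge0 ?ler0n // addr_ge0 ?ler0n // mulrn_wge0 // exprn_ge0.
Qed.

End Arith.

Section Moments.
Variables (R : realFieldType) (T : finType) (P : T -> R).
Hypothesis P0 : forall x, 0 <= P x.
Hypothesis P1 : \sum_x P x = 1.

Lemma card_pos : (0 < #|T|)%N.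
Proof.
rewrite lt0n; apply/negP => /eqP /card0_eq h.
move: P1; rewrite big_pred0 // => /eqP; by rewrite eq_sym oner_eq0.
Qed.

Lemma momentA m : 1 <= #|T|%:R ^+ m * \sum_x P x ^+ m.+1.
Proof.
set N : R := #|T|%:R.
have N0 : 0 < N by rewrite ltr0n card_pos.
have H : \sum_(x : T) (1 + m.+1%:R * (N * P x - 1)) <= \sum_x (N * P x) ^+ m.+1.
  by apply: ler_sum => x _; apply: bernoulli; rewrite mulr_ge0 // ltW.
move: H; rewrite big_split /= sumr_const -mulr_sumr big_split /= -mulr_sumr P1.
rewrite sumrN sumr_const -/N mulr1 subrr mulr0 addr0.
under eq_bigr => x _ do rewrite exprMn.
rewrite -mulr_sumr exprS -mulrA -[X in X <= _ -> _](mulr1 N) ler_pM2l //.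
Qed.

Lemma momentB m c s : (0 < m)%N -> 0 < c -> c ^+ m = \sum_x P x ^+ m.+1 ->
  (0 < s)%N -> (s <= m.+1)%N -> \sum_x P x ^+ s <= c ^+ s.-1.
Proof.
move=> m0 c0 cS s0 sm; set k := s.-1.
have ks : s = k.+1 by rewrite /k prednK.
have km : (k <= m)%N by rewrite -ltnS -ks.
have c0' : c != 0 by rewrite gt_eqF.
have step x : P x ^+ s <=
    c ^+ k * ((P x ^+ m.+1 / c ^+ m) *+ k + P x * (m - k)%:R) / m%:R.
  have e : P x ^+ s = c ^+ k * (P x * (P x / c) ^+ k).
    by rewrite ks exprS expr_div_n; field; exact: expf_neq0.
  have e2 : c ^+ k * ((P x ^+ m.+1 / c ^+ m) *+ k + P x * (m - k)%:R) / m%:R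
      = c ^+ k * (P x * (((P x / c) ^+ m *+ k + (m - k)%:R) / m%:R)).
    rewrite !expr_div_n exprS; field; by rewrite expf_neq0 // pnatr_eq0 -lt0n m0.
  rewrite e e2; apply: ler_wpM2l; first by rewrite exprn_ge0 // ltW.
  apply: ler_wpM2l => //; apply: wmean => //.
  by rewrite divr_ge0 // ltW.
apply: le_trans; first by apply: ler_sum => x _; exact: step.
rewrite /= -mulr_suml -mulr_sumr big_split /= sumrMnl -mulr_suml -mulr_suml P1.
rewrite -cS divff ?expf_neq0 // mul1r -natrD subnKC // -mulrA divff ?mulr1 //.
by rewrite pnatr_eq0 -lt0n.
Qed.
End Moments.

Section Mats.
Variables (R : realFieldType) (F : finFieldType) (n d : nat).

Lemma sum_prod_cols (G : 'I_d -> 'cV[F]_n -> R) :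
  \sum_(Y : 'M[F]_(n, d)) \prod_k G k (col k Y) = \prod_k \sum_y G k y.
Proof.
rewrite bigA_distr_bigA /=.
pose h (Y : 'M[F]_(n, d)) : {ffun 'I_d -> 'cV[F]_n} := [ffun k => col k Y].
pose g (f : {ffun 'I_d -> 'cV[F]_n}) : 'M[F]_(n, d) := \matrix_(i, k) f k i 0.
have hg : cancel g h.
  by move=> f; apply/ffunP => k; apply/matrixP => i j; rewrite ffunE !mxE ord1.
have gh : cancel h g.
  by move=> Y; apply/matrixP => i k; rewrite !mxE ffunE mxE.
rewrite (reindex h); last by exists g => ? _.
by apply: eq_bigr => Y _; apply: eq_bigr => k _; rewrite ffunE.
Qed.

Definition ecol (k : nat) : 'cV[F]_d := \col_i ((i : nat) == k)%:R.

Lemma mul_ecol (V : 'M[F]_(n, d)) (k : 'I_d) : V *m ecol k = col k V.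
Proof.
rewrite colE; congr (_ *m _); apply/matrixP => i j.
by rewrite !mxE ord1 eqxx andbT.
Qed.

Definition phi (k0 : 'I_d) (b : 'cV[F]_d) (Y : 'M[F]_(n, d)) : 'M[F]_(n, d) :=
  \matrix_(i, k) if k == k0 then (Y *m b) i 0 else Y i k.

Lemma col_phi k0 b Y k :
  col k (phi k0 b Y) = if k == k0 then Y *m b else col k Y.
Proof.
apply/matrixP => i j; rewrite !mxE ord1; by case: eqP => // _; rewrite !mxE.
Qed.

Lemma phi_inj k0 (b : 'cV[F]_d) : b k0 0 != 0 -> injective (phi k0 b).
Proof.
move=> b0 Y1 Y2 e.
have oth k : k != k0 -> col k Y1 = col k Y2.
  by move=> /negPf kk; move: (congr1 (col k) e); rewrite !col_phi kk.
have e0 : Y1 *m b = Y2 *m b by move: (congr1 (col k0) e); rewrite !col_phi eqxx.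
apply/matrixP => i k; have [->|kk] := eqVneq k k0; last first.
  by move: (congr1 (fun M : 'cV[F]_n => M i 0) (oth k kk)); rewrite !mxE.
move: (congr1 (fun M : 'cV[F]_n => M i 0) e0); rewrite !mxE.
rewrite (bigD1 k0) //= [in X in _ = X -> _](bigD1 k0) //=.
rewrite (eq_bigr (fun j => Y2 i j * b j 0)); last first.
  by move=> j jk; move: (congr1 (fun M : 'cV[F]_n => M i 0) (oth j jk)); rewrite !mxE => ->.
by move=> /addIr /(mulIf b0).
Qed.

End Mats.

Lemma agm1r (R : realFieldType) (a b : R) r : 0 <= a -> 0 <= b ->
  a * b ^+ r <= (a ^+ r.+1 + b ^+ r.+1 *+ r) / r.+1%:R.
Proof.
move=> a0 b0.
have := @agm_blocks R (a ^+ r.+1) (b ^+ r.+1) 1 r (exprn_ge0 _ a0) (exprn_ge0 _ b0) (ltn0Sn _).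
rewrite add1n expr1 mulr1n -exprM => H.
 apply: (@root_le _ _ _ r.+1 (ltn0Sn _)) => //.
- by rewrite mulr_ge0 // exprn_ge0.
- by rewrite divr_ge0 // addr_ge0 ?mulrn_wge0 // exprn_ge0.
by rewrite exprMn -exprM mulnC.
Qed.

Section StepA.
Variables (R : realFieldType) (F : finFieldType) (n d r : nat) (P : 'cV[F]_n -> R).
Hypothesis P0 : forall x, 0 <= P x.
Hypothesis P1 : \sum_x P x = 1.

Definition X1 (x : 'cV[F]_n) : 'M[F]_(n, d) := \matrix_(i, k) x i 0.

Lemma X1mul x (b : 'cV[F]_d) : X1 x *m b = (\sum_k b k 0) *: x.
Proof.
apply/matrixP => i j; rewrite !mxE ord1 mulr_suml; apply: eq_bigr => k _.
by rewrite !mxE mulrC.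
Qed.

Lemma prod_cols_one : \sum_(Y : 'M[F]_(n, d)) \prod_k P (col k Y) = 1.
Proof.
rewrite (@sum_prod_cols R F n d (fun _ => P)); under eq_bigr => k _ do rewrite P1.
by rewrite prodr_const expr1n.
Qed.

Lemma stepA (b : 'cV[F]_d) c : (0 < r)%N -> (1 < d + r)%N -> 0 < c ->
  c ^+ (d + r).-1 = \sum_x P x ^+ (d + r) ->
  (#|{: 'cV[F]_n}|%:R)^-1 <= c ->
  (#|{: 'cV[F]_n}|%:R)^-1 * \sum_x \sum_(V : 'M[F]_(n, d))
     (\prod_k P (x - col k V)) * P (x - V *m b) ^+ r <= c ^+ r.
Proof.
move=> r0 dr1 c0 cS Nc.
set N : R := #|{: 'cV[F]_n}|%:R.
have N0 : 0 < N by rewrite ltr0n; apply: (card_pos _ _ _ P1).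
set a := 1 - \sum_k b k 0.
have e1 x : \sum_(V : 'M[F]_(n, d)) (\prod_k P (x - col k V)) * P (x - V *m b) ^+ r
   = \sum_(Y : 'M[F]_(n, d)) (\prod_k P (col k Y)) * P (a *: x + Y *m b) ^+ r.
  have inj : injective (fun Y : 'M[F]_(n, d) => X1 x - Y).
    by move=> Y1 Y2 /addrI /oppr_inj.
  rewrite (reindex_inj inj) /=; apply: eq_bigr => Y _; congr (_ * P _ ^+ _).
    apply: eq_bigr => k _; congr (P _); apply/matrixP => i j.
    by rewrite !mxE ord1 opprB addrC subrK.
  rewrite mulmxBl X1mul opprB /a scalerBl scale1r.
  by rewrite [Y *m b - _]addrC addrA.
rewrite (eq_bigr _ (fun x _ => e1 x)) exchange_big /=.
have [a0|a0] := eqVneq a 0; last first.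
  have e2 Y : \sum_x (\prod_k P (col k Y)) * P (a *: x + Y *m b) ^+ r
      = (\prod_k P (col k Y)) * \sum_z P z ^+ r.
    rewrite -mulr_sumr; congr (_ * _).
    have inj : injective (fun x : 'cV[F]_n => a *: x + Y *m b).
      by move=> x1 x2 /addIr /(scalerI a0).
    by rewrite [RHS](reindex_inj inj).
  rewrite (eq_bigr _ (fun Y _ => e2 Y)) -mulr_suml prod_cols_one mul1r.
  rewrite -(prednK r0) exprS; apply: ler_pM => //.
  - by rewrite invr_ge0 ltW.
  - by rewrite sumr_ge0 // => z _; rewrite exprn_ge0.
  apply: (momentB _ _ _ P0 P1 (d + r).-1) => //.
  - by rewrite -ltnS prednK // (ltn_trans _ dr1).
  - by rewrite prednK // (ltn_trans _ dr1).
  - by lia.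
have [k0 bk0] : exists k0, b k0 0 != 0.
  apply/existsP; apply: contraT; rewrite negb_exists => /forallP h.
  move: a0; rewrite /a big1 ?subr0; first by move/eqP; rewrite oner_eq0.
  by move=> k _; move: (h k); rewrite negbK => /eqP.
have d0 : (0 < d)%N := leq_ltn_trans (leq0n k0) (ltn_ord k0).
have e2 Y : \sum_x (\prod_k P (col k Y)) * P (a *: x + Y *m b) ^+ r
    = N * ((\prod_k P (col k Y)) * P (Y *m b) ^+ r).
  have e3 x : (\prod_k P (col k Y)) * P (a *: x + Y *m b) ^+ r
      = (\prod_k P (col k Y)) * P (Y *m b) ^+ r.
    rewrite (_ : a *: x + Y *m b = Y *m b) //.
    by apply/matrixP => i j; rewrite !mxE a0 mul0r add0r.
  rewrite (eq_bigr _ (fun x _ => e3 x)).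
  by rewrite sumr_const -mulr_natl.
rewrite (eq_bigr _ (fun Y _ => e2 Y)) -mulr_sumr mulKf ?gt_eqF //.
set m1 := \sum_z P z ^+ r.+1.
pose G (k : 'I_d) := if k == k0 then (fun y => P y ^+ r.+1) else P.
have first : \sum_(Y : 'M[F]_(n, d)) (\prod_(k | k != k0) P (col k Y)) * P (col k0 Y) ^+ r.+1 = m1.
  have := @sum_prod_cols R F n d G.
  rewrite [RHS](bigD1 k0) //= (_ : \sum_y G k0 y = m1); last by rewrite /G eqxx.
  rewrite [X in _ = _ * X](eq_bigr (fun _ => 1)); last first.
    by move=> k kk; rewrite /G (negPf kk) P1.
  rewrite prodr_const expr1n mulr1 => <-; apply: eq_bigr => Y _.
  rewrite [RHS](bigD1 k0) //= [G k0]/G eqxx mulrC; congr (_ * _).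
  by apply: eq_bigr => k kk; rewrite /G (negPf kk).
have second : \sum_(Y : 'M[F]_(n, d)) (\prod_(k | k != k0) P (col k Y)) * P (Y *m b) ^+ r.+1 = m1.
  rewrite -{}first [RHS](reindex_inj (@phi_inj F n d k0 b bk0)).
  apply: eq_bigr => Y _; rewrite col_phi eqxx; congr (_ * _).
  by apply: eq_bigr => k kk; rewrite col_phi (negPf kk).
apply: (@le_trans _ _ (\sum_(Y : 'M[F]_(n, d)) (\prod_(k | k != k0) P (col k Y)) *
   ((P (col k0 Y) ^+ r.+1 + P (Y *m b) ^+ r.+1 *+ r) / r.+1%:R))).
  apply: ler_sum => Y _; rewrite (bigD1 k0) //= [P (col k0 Y) * _]mulrC -mulrA.
  apply: ler_wpM2l; first by rewrite prodr_ge0.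
  exact: agm1r.
rewrite (eq_bigr (fun Y => ((\prod_(k | k != k0) P (col k Y)) * P (col k0 Y) ^+ r.+1
    + ((\prod_(k | k != k0) P (col k Y)) * P (Y *m b) ^+ r.+1) *+ r) / r.+1%:R)); last first.
  by move=> Y _; rewrite mulrA mulrDr mulrnAr.
rewrite -mulr_suml big_split /= sumrMnl first second -mulrS -[m1 *+ _]mulr_natr mulfK ?pnatr_eq0 //.
have dr : (d + r).-1.+1 = (d + r)%N by rewrite prednK // (ltn_trans _ dr1).
apply: (momentB _ _ _ P0 P1 (d + r).-1 c r.+1) => //; try lia.
by rewrite dr.
Qed.
End StepA.

Definition famI (F : finFieldType) (p d : nat) (I : {set 'I_p}) :
  pred {ffun 'I_p -> 'cV[F]_d} :=
  family (fun j => if j \in I then pred1 (ecol F d (index j (enum I))) else predT).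

Arguments famI {F p d}.

Section StepT.
Variables (R : realFieldType) (F : finFieldType) (n p d : nat) (P : 'cV[F]_n -> R).
Hypothesis P0 : forall x, 0 <= P x.
Hypothesis P1 : \sum_x P x = 1.

Lemma prod_split (I : {set 'I_p}) (b : {ffun 'I_p -> 'cV[F]_d}) (j0 : 'I_p)
  (x : 'cV[F]_n) (V : 'M[F]_(n, d)) :
  #|I| = d -> b \in famI I ->
  \prod_(l < p) P (x - V *m b l) =
  (\prod_(k < d) P (x - col k V)) * \prod_(l in ~: I) P (x - V *m b l).
Proof.
move=> cI /familyP bI.
rewrite (bigID (fun l => l \in I)) /=; congr (_ * _); last first.
  by apply: eq_bigl => l; rewrite inE.
rewrite -big_enum (big_nth j0) -cardE cI big_mkord.
apply: eq_bigr => k _.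
have kI : nth j0 (enum I) k \in I by rewrite -mem_enum mem_nth // -cardE cI.
move: (bI (nth j0 (enum I) k)); rewrite kI /= => /eqP ->.
by rewrite index_uniq ?enum_uniq ?mul_ecol // -cardE cI.
Qed.


Lemma sum_shift (x : 'cV[F]_n) : \sum_(V : 'M[F]_(n, d)) \prod_k P (x - col k V) = 1.
Proof.
rewrite (@sum_prod_cols R F n d (fun _ y => P (x - y))).
have inj : injective (fun y : 'cV[F]_n => x - y) by move=> y1 y2 /addrI /oppr_inj.
under eq_bigr => k _ do rewrite (reindex_inj inj) /=.
under eq_bigr => k _ do under eq_bigr => y _ do rewrite opprB addrC subrK.
by rewrite P1 prodr_const expr1n.
Qed.

Lemma amgm_set (A : {set 'I_p}) (X : 'I_p -> R) r : #|A| = r -> (0 < r)%N ->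
  (forall l, 0 <= X l) ->
  \prod_(l in A) X l <= (\sum_(l in A) X l ^+ r) / r%:R.
Proof.
move=> cA r0 X0.
have := leif_AGM (A := mem A) (E := fun l => X l ^+ r).
rewrite cA prodrXl => /(_ (fun l _ => exprn_ge0 r (X0 l))) /leif_le H.
apply: (@root_le _ _ _ r r0) => //.
- by rewrite prodr_ge0.
- by rewrite divr_ge0 // sumr_ge0 // => l _; rewrite exprn_ge0.
exact: (leif_le H).
Qed.

Lemma stepT (I : {set 'I_p}) (b : {ffun 'I_p -> 'cV[F]_d}) (j0 : 'I_p) c :
  #|I| = d -> b \in famI I -> (d <= p)%N -> (1 < p)%N -> 0 < c ->
  c ^+ p.-1 = \sum_x P x ^+ p ->
  (#|{: 'cV[F]_n}|%:R)^-1 <= c ->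
  (#|{: 'cV[F]_n}|%:R)^-1 * \sum_x \sum_(V : 'M[F]_(n, d))
     \prod_(l < p) P (x - V *m b l) <= c ^+ (p - d).
Proof.
move=> cI bI dp p1 c0 cS Nc.
set N : R := #|{: 'cV[F]_n}|%:R.
have N0 : 0 < N by rewrite ltr0n; apply: (card_pos _ _ _ P1).
under eq_bigr => x _ do under eq_bigr => V _ do rewrite (prod_split _ _ j0 x V cI bI).
have h := cardsC I; rewrite cI card_ord in h.
have cC : #|~: I| = (p - d)%N by lia.
have [ed|ltdp] := eqVneq d p.
  have pd0 : (p - d = 0)%N by rewrite ed subnn.
  rewrite pd0 expr0.
  have e0 : ~: I =i pred0 by apply: card0_eq; rewrite cC pd0.
  under eq_bigr => x _ do under eq_bigr => V _ do rewrite (big_pred0 _ _ _ _ e0) mulr1.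
  under eq_bigr => x _ do rewrite sum_shift.
  by rewrite sumr_const mulVf ?gt_eqF.
set r := (p - d)%N.
have r0 : (0 < r)%N by rewrite subn_gt0 ltn_neqAle ltdp dp.
have dr : (d + r)%N = p by rewrite subnKC.
apply: (@le_trans _ _ (N^-1 * \sum_x \sum_(V : 'M[F]_(n, d)) (\prod_k P (x - col k V)) *
   ((\sum_(l in ~: I) P (x - V *m b l) ^+ r) / r%:R))).
  apply: ler_wpM2l; first by rewrite invr_ge0 ltW.
  apply: ler_sum => x _; apply: ler_sum => V _; apply: ler_wpM2l; first by rewrite prodr_ge0.
  by apply: amgm_set.
have e : N^-1 * \sum_x \sum_(V : 'M[F]_(n, d)) (\prod_k P (x - col k V)) *
   ((\sum_(l in ~: I) P (x - V *m b l) ^+ r) / r%:R) =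
   (\sum_(l in ~: I) N^-1 * \sum_x \sum_(V : 'M[F]_(n, d)) (\prod_k P (x - col k V)) *
     P (x - V *m b l) ^+ r) / r%:R.
  under eq_bigr => x _ do under eq_bigr => V _ do rewrite mulrA mulr_sumr.
  rewrite -mulr_sumr -mulrA; congr (_ * _).
  under eq_bigr => x _ do rewrite -mulr_suml exchange_big /=.
  by rewrite -mulr_suml exchange_big.
rewrite e.
apply: (@le_trans _ _ ((\sum_(l in ~: I) c ^+ r) / r%:R)).
  apply: ler_wpM2r; first by rewrite invr_ge0 ler0n.
  apply: ler_sum => l _; apply: stepA => //; rewrite dr //.
by rewrite sumr_const cC -/r -[c ^+ r *+ r]mulr_natr mulfK // pnatr_eq0 -lt0n.
Qed.
End StepT.

Lemma cover_sum (R : realFieldType) (X Y : finType) (phi : X -> Y) (D : pred X)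
  (Q : pred Y) (f : Y -> R) : (forall y, 0 <= f y) ->
  (forall y, Q y -> exists2 x, D x & phi x = y) ->
  \sum_(y | Q y) f y <= \sum_(x | D x) f (phi x).
Proof.
move=> f0 cov.
rewrite (partition_big phi predT) //= [X in _ <= X](bigID Q) /=.
rewrite -[X in X <= _]addr0; apply: lerD; last first.
  by apply: sumr_ge0 => y _; apply: sumr_ge0.
apply: ler_sum => y Qy; have [x Dx <-] := cov y Qy.
rewrite (bigD1 x) /=; last by rewrite Dx eqxx.
rewrite -[X in X <= _]addr0 lerD2l; apply: sumr_ge0 => ? _ //.
Qed.

Definition Mof (F : finFieldType) n p d (V : 'M[F]_(n, d)) (b : {ffun 'I_p -> 'cV[F]_d}) :
  'M[F]_(n, p) := \matrix_(i, l) (V *m b l) i 0.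

Arguments Mof {F n p d}.

Lemma col_Mof (F : finFieldType) n p d (V : 'M[F]_(n, d)) (b : {ffun 'I_p -> 'cV[F]_d}) l :
  col l (Mof V b) = V *m b l.
Proof. by apply/matrixP => i j; rewrite !mxE ord1. Qed.

Lemma decomp (F : finFieldType) n p d (j0 : 'I_p) (M : 'M[F]_(n, p)) :
  \rank M = d -> exists I : {set 'I_p}, exists b, exists V : 'M[F]_(n, d),
    [/\ #|I| = d, b \in famI I & Mof V b = M].
Proof.
move=> rM.
set A := M^T.
set f := maxrankfun A.
set I := [set f k | k : 'I_(\rank A)].
have cI : #|I| = d by rewrite card_imset ?card_ord ?mxrank_tr //; exact: maxrankfun_inj.
pose h (k : 'I_d) : 'I_p := nth j0 (enum I) k.
set W := rowsub h A.
have idxd l : l \in I -> (index l (enum I) < d)%N.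
  by move=> lI; rewrite -cI cardE index_mem mem_enum.
have hidx l (lI : l \in I) : h (Ordinal (idxd l lI)) = l.
  by rewrite /h /= nth_index // mem_enum.
have AW : (A <= W)%MS.
  apply: (submx_trans (_ : A <= rowsub f A)%MS); first by rewrite eq_maxrowsub.
  apply/row_subP => k; rewrite row_rowsub.
  have fI : f k \in I by apply/imsetP; exists k.
  rewrite -(hidx _ fI) -(row_rowsub h A); exact: row_sub.
pose b := [ffun l => if l \in I then ecol F d (index l (enum I))
                    else (row l A *m pinvmx W)^T].
exists I, b, W^T; split => //.
  apply/familyP => l; rewrite ffunE; case: ifP => //= _; exact: eqxx.
apply/matrixP => i l; rewrite mxE.
suff -> : W^T *m b l = col l M by rewrite mxE.
rewrite ffunE; case: ifP => lI.
  rewrite (@mul_ecol F n d W^T (Ordinal (idxd l lI))).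
  apply/matrixP => i' j; rewrite !mxE hidx //.
rewrite -trmx_mul mulmxKpV; last exact: submx_trans (row_sub l A) AW.
by rewrite /A -tr_col trmxK.
Qed.

Lemma card_famI (F : finFieldType) p d (I : {set 'I_p}) : #|I| = d ->
  #|famI (F := F) (d := d) I| = (#|{: 'cV[F]_d}| ^ (p - d))%N.
Proof.
move=> cI; rewrite /famI card_family foldrE big_map big_enum /=.
rewrite (bigID (fun j => j \in I)) /=.
rewrite big1 ?mul1n; last by move=> j ->; rewrite card1.
rewrite (eq_bigr (fun _ => #|{: 'cV[F]_d}|)); last first.
  by move=> j /negPf ->; rewrite cardT.
rewrite prod_nat_const.
have h := cardsC I; rewrite cI card_ord in h.
have -> : #|(fun i : 'I_p => i \notin I)| = #|~: I|.
  by apply: eq_card => j; rewrite inE.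
by congr (_ ^ _)%N; lia.
Qed.

Theorem mainTheorem13 (R : realType) (F : finFieldType) (n p : nat)
  (P : {ffun 'cV[F]_n -> R}) :
  (2 <= p)%N ->
  (forall x, 0 <= P x) -> \sum_x P x = 1 ->
  forall d : nat, (d <= p)%N ->
  gfun R F n p P d <=
    'C(p, d)%:R * (#|F|%:R `^ (((p - d)%N)%:R * (d%:R - renyiH R F n p P))).
Proof.
move=> p2 P0 P1 d dp.
have p0 : (0 < p)%N by lia.
pose j0 : 'I_p := Ordinal p0.
set S := \sum_x P x ^+ p.
set N : R := #|{: 'cV[F]_n}|%:R.
set q : R := #|F|%:R.
have N0 : 0 < N by rewrite ltr0n; apply: (card_pos _ _ _ P1).
have qN : q ^+ n = N by rewrite /q /N -natrX card_mx muln1.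
have q1 : 1 < q by rewrite /q ltr1n card_finNzRing_gt1.
have pp : p.-1.+1 = p by rewrite prednK.
have SA : 1 <= N ^+ p.-1 * S.
  by have := momentA _ _ _ P0 P1 p.-1; rewrite pp.
have S0 : 0 < S.
  rewrite lt_def; apply/andP; split; last by rewrite sumr_ge0 // => x _; rewrite exprn_ge0.
  by apply: contraTneq SA => ->; rewrite mulr0 ler10.
set c := expR (ln S / p.-1%:R).
have c0 : 0 < c by apply: expR_gt0.
have pm0 : p.-1%:R != 0 :> R by rewrite pnatr_eq0 -lt0n; lia.
have cS : c ^+ p.-1 = S.
  by rewrite /c -expRM_natl mulrC divfK // lnK // posrE.
have Nc : N^-1 <= c.
  have h : 1 <= N * c.
    rewrite -(@expr_ge1 _ p.-1); last by rewrite mulr_ge0 // ltW.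
      by rewrite exprMn cS.
    lia.
  apply: (@le_trans _ _ (N^-1 * (N * c))); last by rewrite mulKf ?lt0r_neq0.
  by rewrite -{1}(mulr1 N^-1) ler_wpM2l // invr_ge0 ltW.
have rhs : q `^ ((p - d)%N%:R * (d%:R - renyiH R F n p P))
    = q ^+ (d * (p - d)) * c ^+ (p - d).
  have q0 : q != 0 by rewrite gt_eqF // (lt_trans ltr01 q1).
  have lq : ln q != 0 by rewrite gt_eqF // ln_gt0.
  rewrite /powR (negPf q0) /renyiH -/S -/q /c.
  rewrite -[in RHS](lnK (_ : q \in Num.pos)); last by rewrite posrE (lt_trans ltr01 q1).
  rewrite -!expRM_natl -expRD; congr expR.
  have pm : p.-1%:R = p%:R - 1 :> R by rewrite -subn1 natrB.
  have p1 : 1 - p%:R != 0 :> R.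
    by rewrite subr_eq0 eq_sym pnatr_eq1; lia.
  rewrite pm natrM in pm0 *; field; apply/and3P; split => //.
have step1 x : \sum_(V : 'M[F]_(n, p) | \rank V == d) \prod_(l < p) P (x - col l V)
   <= \sum_(I : {set 'I_p} | #|I| == d) \sum_(b | b \in famI (F := F) (d := d) I)
        \sum_(V : 'M[F]_(n, d)) \prod_(l < p) P (x - V *m b l).
  apply: le_trans (@cover_sum R _ _
     (fun t : ({set 'I_p} * {ffun 'I_p -> 'cV[F]_d}) * 'M[F]_(n, d) => Mof t.2 t.1.2)
     (fun t => (#|t.1.1| == d) && (t.1.2 \in famI (F := F) (d := d) t.1.1) && true)
     (fun M => \rank M == d) (fun M => \prod_(l < p) P (x - col l M)) _ _) _.
  - by move=> M; rewrite prodr_ge0.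
  - move=> M /eqP rM; have [I [b [V [cI bI e]]]] := @decomp F n p d j0 M rM.
    by exists ((I, b), V) => //=; rewrite cI eqxx bI.
  rewrite [X in _ <= X]pair_big_dep [X in _ <= X]pair_big_dep /=.
  under eq_bigr => t _ do under eq_bigr => l _ do rewrite col_Mof.
  by [].
rewrite rhs /gfun -/q qN.
apply: (@le_trans _ _ (N^-1 * \sum_x \sum_(I : {set 'I_p} | #|I| == d)
   \sum_(b | b \in famI (F := F) (d := d) I)
        \sum_(V : 'M[F]_(n, d)) \prod_(l < p) P (x - V *m b l))).
  by apply: ler_wpM2l; [rewrite invr_ge0 ltW | apply: ler_sum => x _; apply: step1].
rewrite exchange_big /= mulr_sumr.
under eq_bigr => I _ do rewrite exchange_big /= mulr_sumr.
apply: (@le_trans _ _ (\sum_(I : {set 'I_p} | #|I| == d)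
   \sum_(b | b \in famI (F := F) (d := d) I) c ^+ (p - d))).
  apply: ler_sum => I /eqP cI; apply: ler_sum => b bI.
  apply: (@stepT R F n p d P P0 P1 I b j0 c) => //.
rewrite (eq_bigr (fun _ => q ^+ (d * (p - d)) * c ^+ (p - d))); last first.
  move=> I /eqP cI; rewrite sumr_const card_famI // card_mx muln1 -expnM.
  by rewrite -mulr_natl natrX.
have cd : #|(fun I : {set 'I_p} => #|I| == d)| = 'C(p, d).
  by rewrite -[p in RHS](card_ord p) -card_draws; apply: eq_card => I; rewrite inE.
by rewrite sumr_const cd mulr_natl.
Qed.
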